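(* For each $i=1,\dots,n-1$, in the ring of $n\times n$ matrices over $\mathbf{Z}[F_n\rtimes B_n]$, $$(\phi(\sigma_i)+\sigma_i g_i I)(\phi(\sigma_i)-\sigma_i I)=0,$$ where $\sigma_i g_i I$ and $\sigma_i I$ denote the scalar matrices with diagonal entries $\sigma_i g_i$ and $\sigma_i$.
   Context: The braid group $B_n$ ($n\ge2$) has generators $\sigma_1,\dots,\sigma_{n-1}$ with relations $\sigma_i\sigma_j=\sigma_j\sigma_i$ for $|i-j|>1$ and $\sigma_i\sigma_j\sigma_i=\sigma_j\sigma_i\sigma_j$ for $|i-j|=1$. Let $F_n$ be the free group on $g_1,\dots,g_n$. The semidirect product $F_n\rtimes B_n$ is the group generated by $F_n$ and $B_n$ subject to the additional relations $g_{i+1}\sigma_i=\sigma_i g_i$, $g_i\sigma_i=\sigma_i g_i g_{i+1}g_i^{-1}$, and $g_j\sigma_i=\sigma_i g_j$ for $j\notin\{i,i+1\}$. For $i=1,\dots,n-1$ let $R_i=\begin{bmatrix}0&g_i\\1&1-g_i\end{bmatrix}$, and let $\phi$ be the homomorphism from $B_n$ to the invertible $n\times n$ matrices over the group ring $\mathbf{Z}[F_n\rtimes B_n]$ (usual matrix multiplication) given by $\phi(\sigma_i)=\sigma_i\cdot\mathrm{diag}(I_{i-1},R_i,I_{n-i-1})$, where the scalar $\sigma_i$ multiplies every entry on the left. *)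

(* Defs.v *)
From HB Require Import structures.
From mathcomp Require Import all_boot all_order all_algebra.
Set Implicit Arguments. Unset Strict Implicit. Unset Printing Implicit Defensive.
Import GRing.Theory.
Local Open Scope ring_scope.

(* Indices are 1-based as in the paper: sig i (1 <= i <= n-1) is the image of
   sigma_i, g j (1 <= j <= n) is the image of g_j, in a ring R.  The ring
   Z[F_n x| B_n] is the universal such ring. *)

(* (a,b) entry (1-based) of diag(I_{i-1}, R_i, I_{n-i-1}) /\
   R_i = [[0, g_i], [1, 1 - g_i]]. *)
Definition Rblock_entry (R : nzRingType) (g : nat -> R) (i a b : nat) : R :=
  if (a == i) && (b == i) then 0
  else if (a == i) && (b == i.+1) then g i
  else if (a == i.+1) && (b == i) then 1
  else if (a == i.+1) && (b == i.+1) then 1 - g i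
  else if a == b then 1 else 0.

(* phi(sigma_i) = sigma_i . diag(I_{i-1}, R_i, I_{n-i-1}) (left scalar mult). *)
Definition phi (R : nzRingType) (n : nat) (sig g : nat -> R) (i : nat) : 'M[R]_n :=
  \matrix_(j < n, k < n) (sig i * Rblock_entry g i j.+1 k.+1).

Definition semidirect_relations (R : unitRingType) (n : nat) (sig g : nat -> R) : Prop :=
  (forall i, (1 <= i <= n.-1)%N -> sig i \is a GRing.unit) /\
      (forall j, (1 <= j <= n)%N -> g j \is a GRing.unit) /\
      (forall i j, (1 <= i)%N -> (j <= n.-1)%N -> (i.+1 < j)%N ->
          sig i * sig j = sig j * sig i) /\
      (forall i, (1 <= i)%N -> (i.+1 <= n.-1)%N ->
          sig i * sig i.+1 * sig i = sig i.+1 * sig i * sig i.+1) /\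
      (forall i, (1 <= i <= n.-1)%N -> g i.+1 * sig i = sig i * g i) /\
      (forall i, (1 <= i <= n.-1)%N ->
          g i * sig i = sig i * (g i * g i.+1 * (g i)^-1)) /\
      (forall i j, (1 <= i <= n.-1)%N -> (1 <= j <= n)%N -> j != i -> j != i.+1 ->
          g j * sig i = sig i * g j).

(* Main.v *)
Require Import Defs.
From HB Require Import structures.
From mathcomp Require Import all_boot all_order all_algebra zify.
Import GRing.Theory.
Local Open Scope ring_scope.

Theorem proposition5p1 (R : unitRingType) (n : nat) (sig g : nat -> R) :
  (2 <= n)%N ->
  semidirect_relations n sig g ->
  forall i : nat, (1 <= i <= n.-1)%N ->
    (phi n sig g i + (sig i * g i)%:M) *m (phi n sig g i - (sig i)%:M) = 0.
Proof.
move=> n2 _ [//|m] /andP[_ Hm].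
have h0 : (m < n)%N by lia.
have h1 : (m.+1 < n)%N by lia.
pose k0 : 'I_n := Ordinal h0. pose k1 : 'I_n := Ordinal h1.
apply/matrixP => j l; rewrite !mxE.
rewrite (bigD1 k0) // (bigD1 k1) /=; last by apply/eqP=> /(congr1 val) /=; lia.
rewrite big1 ?addr0; last first.
  move=> k /andP[/eqP nk1 /eqP nk0]; rewrite !mxE /Rblock_entry.
  have a : (k.+1 != m.+1)%N by apply/eqP=> e; apply: nk1; apply: val_inj; rewrite /=; case: e.
  have b : (k.+1 != m.+2)%N by apply/eqP=> e; apply: nk0; apply: val_inj; rewrite /=; case: e.
  rewrite (negbTE a) (negbTE b) /=.
  case: (k.+1 =P l.+1) => e.
    by rewrite (_ : k = l) ?eqxx ?mulr1 ?subrr ?mulr0 //; apply: val_inj; case: e.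
  rewrite (_ : (k == l) = false) ?mulr0 ?subrr ?mulr0 //.
  by apply/eqP=> e'; apply: e; rewrite e'.
rewrite !mxE /Rblock_entry /= !eqxx /=.
have F1 : (m.+1 == m.+2) = false by apply/eqP; lia.
have F2 : (m.+2 == m.+1) = false by apply/eqP; lia.
rewrite -!val_eqE /= F1 F2 /=.
move: (nat_of_ord j) (nat_of_ord l) => J L.
rewrite !eqSS !andbT.
have F3 : (m == m.+1) = false by apply/eqP; lia.
have F4 : (m.+1 == m) = false by apply/eqP; lia.
case: (J =P m) => [?|?]; case: (L =P m) => [?|?];
case: (J =P m.+1) => [?|?]; case: (L =P m.+1) => [?|?]; subst; try (exfalso; lia);
rewrite ?eqxx ?F3 ?F4 /=.
all: try (exfalso; lia).
all: try (case: (m == L); case: (m.+1 == L)).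
all: rewrite ?mulr0 ?mulr1 ?mulr1n ?mulr0n ?addr0 ?add0r ?sub0r ?subr0 ?subrr ?mul0r ?mulr0 ?addr0 //.
all: rewrite ?oppr0 ?mulr0 ?addr0 ?mulrN ?addNr ?mulrBr ?mulr1 ?subrK //.
all: try by rewrite addNr.
all: by rewrite addrC addrAC subrK subrr.
Qed.
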